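(* Let $n=5$, fix pairwise distinct $i,j,k\in\{1,2,3\}$, and let $\boldsymbol{D}$ satisfy conditions (i)–(x) of the scheme (with offsets chosen according to (A1)–(A8) and satisfying all separability conditions except the two exempted collisions). If receiver $\mathrm{Rx}_i$ sends the decoded message $W_{ij}$ to $\mathrm{Rx}_j$ over the receiver backhaul, so that $\mathrm{Rx}_j$ cancels $W_{ij}$ from the aligned sum $W_{ij}+W_{jk}$ and decodes $W_{jk}$, and then $\mathrm{Rx}_j$ sends $W_{jk}$ to $\mathrm{Rx}_k$, so that $\mathrm{Rx}_k$ cancels it from the aligned sum $W_{jk}+W_{ki}$ and decodes $W_{ki}$, then all $9$ messages are decoded by their intended receivers, i.e. $\frac{9}{5}$ degrees of freedom are achieved with receiver-backhaul sum-rate $\Theta_{\mathrm{R}}=2$. Moreover, with $n=5$, Cyclic Interference Alignment and Cancellation (all $9$ messages sent over the channel) cannot achieve $\frac{9}{5}$ degrees of freedom with $\Theta_{\mathrm{R}}\le 1$; hence $\Theta_{\mathrm{R}}\ge 2$ is necessary.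
   Context: Cyclic polynomial channel model of the $3$-user $X$-network. Fix $n\in\mathbb{N}$; all congruences are taken modulo $x^n-1$, so $x^a\equiv x^b$ iff $a\equiv b \pmod n$. Let $\mathcal{K}=\{1,2,3\}$. $\mathrm{Tx}_i$ holds one message $W_{ji}$ for each receiver $\mathrm{Rx}_j$, messages lying in an abelian group (binary strings of length $t$). $\mathrm{Tx}_i$ chooses offsets $p_{ji}\in\{0,\dots,n-1\}$ and transmits $u_i(x)\equiv\sum_jW_{ji}x^{p_{ji}}$. Channel matrix $\boldsymbol{D}=(d_{ji})$ of monomials $x^k$, known to all. $\mathrm{Rx}_j$ observes $r_j(x)\equiv\sum_i d_{ji}u_i(x)$; the coefficient at $x^m$ is the sum of messages arriving at offset $m$. At $\mathrm{Rx}_a$ dedicated signals are $d_{al}x^{p_{al}}$ and interfering signals are $d_{al}x^{p_{bl}}$, $b\ne a$. Separability conditions: (S1) for each $i$, $x^{p_{1i}},x^{p_{2i}},x^{p_{3i}}$ pairwise incongruent; (S2) dedicated signals at each receiver pairwise incongruent; (S3) every dedicated signal at $\mathrm{Rx}_a$ incongruent to every interfering signal at $\mathrm{Rx}_a$. A receiver decodes a message if it appears alone at some offset, possibly after subtracting messages it already knows. Degrees of freedom $=M/n$, $M$ the number of messages obtained by their intended receivers. Receiver backhaul network: interference-free links between receivers, each carrying one message-sized group element; $\Theta_{\mathrm{R}}$ is the total number of such elements exchanged. Alignment scheme for fixed pairwise distinct $i,j,k$: (A1) $d_{ii}x^{p_{ji}}\equiv d_{ij}x^{p_{kj}}\equiv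 d_{ik}x^{p_{jk}}$; (A2) $d_{ii}x^{p_{ki}}\equiv d_{ij}x^{p_{jj}}\equiv d_{ik}x^{p_{kk}}$; (A3) $d_{ji}x^{p_{ki}}\equiv d_{jj}x^{p_{kj}}\equiv d_{jk}x^{p_{ik}}$; (A4) $d_{ji}x^{p_{ii}}\equiv d_{jk}x^{p_{kk}}$; (A5) $d_{jj}x^{p_{ij}}\equiv d_{jk}x^{p_{jk}}$; (A6) $d_{ki}x^{p_{ii}}\equiv d_{kj}x^{p_{jj}}\equiv d_{kk}x^{p_{ik}}$; (A7) $d_{kj}x^{p_{ij}}\equiv d_{ki}x^{p_{ji}}$; (A8) $d_{ki}x^{p_{ki}}\equiv d_{kk}x^{p_{jk}}$. (A5) and (A8) are the two exempted collisions (dedicated $W_{jk}$ with interfering $W_{ij}$ at $\mathrm{Rx}_j$; dedicated $W_{ki}$ with interfering $W_{jk}$ at $\mathrm{Rx}_k$). Conditions on $\boldsymbol{D}$: (i) $d_{ij}d_{ki}d_{jk}\equiv d_{ji}d_{ik}d_{kj}$; (ii) $d_{ii}d_{jk}d_{kj}\equiv d_{jj}d_{ik}d_{ki}\equiv d_{kk}d_{ij}d_{ji}$; (iii) $d_{ii}d_{kk}\not\equiv d_{ik}d_{ki}$; (iv) $d_{ii}d_{jj}\not\equiv d_{ij}d_{ji}$; (v) $d_{ii}d_{jk}\not\equiv d_{ik}d_{ji}$; (vi) $d_{ij}d_{jk}\not\equiv d_{ik}d_{jj}$; (vii) $d_{kk}d_{ji}\not\equiv d_{ki}d_{jk}$;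 (viii) $d_{kk}d_{jj}\not\equiv d_{kj}d_{jk}$; (ix) $d_{ii}d_{jj}d_{kk}\not\equiv d_{ij}d_{jk}d_{ki}\equiv d_{ji}d_{kj}d_{ik}$; (x) $d_{kk}d_{ii}d_{jj}d_{kk}\not\equiv d_{jk}d_{kj}d_{ik}d_{ki}$, $d_{ii}d_{ii}d_{jj}d_{kk}\not\equiv d_{ij}d_{ji}d_{ik}d_{ki}$, $d_{jj}d_{ii}d_{jj}d_{kk}\not\equiv d_{ij}d_{ji}d_{jk}d_{kj}$. Under (i)–(x), offsets satisfying (A1)–(A8) and all separability conditions except the two exempted collisions exist. *)

(* Defs.v *)
From mathcomp Require Import all_boot.
Set Implicit Arguments. Unset Strict Implicit. Unset Printing Implicit Defensive.

(* Users {1,2,3} are represented by 'I_3 = {0,1,2}. *)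
Definition user := 'I_3.

(* The message W_{ji} (intended for Rx_j, held by Tx_i) is the pair (j, i). *)
Definition msg := (user * user)%type.

(* Channel matrix: d_{ji} = x^(e j i); it is a matrix of monomials, represented by
   the exponents.  Offsets: p j i is the offset p_{ji} of W_{ji} at Tx_i.
   All congruences are modulo x^n - 1, i.e. x^a == x^b  iff  a = b (mod n);
   products of monomials correspond to sums of exponents. *)

(* offset (exponent mod n) at which message W_{bl} arrives at receiver Rx_a:
   d_{al} x^{p_{bl}} *)
Definition arr (n : nat) (e p : user -> user -> nat) (a : user) (w : msg) : nat :=
  (e a w.2 + p w.1 w.2) %% n.

(* The inductive
   (least-fixed-point) definition is exactly iterated successive cancellation. *)
Inductive decodes (n : nat) (e p : user -> user -> nat) (a : user) (K : msg -> Prop)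
  : msg -> Prop :=
| dec_known w : K w -> decodes n e p a K w
| dec_alone w :
    (forall w', w' <> w -> arr n e p a w' = arr n e p a w -> decodes n e p a K w') ->
    decodes n e p a K w.

(* A receiver backhaul protocol: a list of transfers (src, dst, W), executed in order;
   each transfer carries one message-sized group element over an interference-free
   link from receiver src to receiver dst. *)
Definition transfer := (user * user * msg)%type.

Definition received (tr : seq transfer) (b : user) (w : msg) : Prop :=
  exists t, t \in tr /\ t.1.2 = b /\ t.2 = w.

Definition valid_backhaul (n : nat) (e p : user -> user -> nat) (tr : seq transfer) : Prop :=
  forall (s : nat) (t : transfer), s < size tr -> nth t tr s = t ->
    decodes n e p t.1.1 (received (take s tr) t.1.1) t.2.

Definition theta_R (tr : seq transfer) : nat := size tr.

(* all 9 messages obtained by their intended receivers (M = 9, i.e. DoF 9/n) *)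
Definition all_decoded (n : nat) (e p : user -> user -> nat) (tr : seq transfer) : Prop :=
  forall (j i : user), decodes n e p j (received tr j) (j, i).

Definition channel_conditions (n : nat) (e : user -> user -> nat) (i j k : user) : Prop :=
  e i j + e k i + e j k = e j i + e i k + e k j %[mod n] /\
      e i i + e j k + e k j = e j j + e i k + e k i %[mod n] /\
                 e j j + e i k + e k i = e k k + e i j + e j i %[mod n] /\
      e i i + e k k <> e i k + e k i %[mod n] /\
      e i i + e j j <> e i j + e j i %[mod n] /\
      e i i + e j k <> e i k + e j i %[mod n] /\
      e i j + e j k <> e i k + e j j %[mod n] /\
      e k k + e j i <> e k i + e j k %[mod n] /\
      e k k + e j j <> e k j + e j k %[mod n] /\
      e i i + e j j + e k k <> e i j + e j k + e k i %[mod n] /\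
                  e i j + e j k + e k i = e j i + e k j + e i k %[mod n] /\
      (e k k + e i i + e j j + e k k <> e j k + e k j + e i k + e k i %[mod n] /\
                      e i i + e i i + e j j + e k k <> e i j + e j i + e i k + e k i %[mod n] /\
                      e j j + e i i + e j j + e k k <> e i j + e j i + e j k + e k j %[mod n]).

Definition alignment (n : nat) (e p : user -> user -> nat) (i j k : user) : Prop :=
  e i i + p j i = e i j + p k j %[mod n] /\ e i j + p k j = e i k + p j k %[mod n] /\
      e i i + p k i = e i j + p j j %[mod n] /\ e i j + p j j = e i k + p k k %[mod n] /\
      e j i + p k i = e j j + p k j %[mod n] /\ e j j + p k j = e j k + p i k %[mod n] /\
      e j i + p i i = e j k + p k k %[mod n] /\
      e j j + p i j = e j k + p j k %[mod n] /\
      e k i + p i i = e k j + p j j %[mod n] /\ e k j + p j j = e k k + p i k %[mod n] /\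
      e k j + p i j = e k i + p j i %[mod n] /\
      e k i + p k i = e k k + p j k %[mod n].

(* The two exempted collisions: dedicated W_{jk} with interfering W_{ij} at Rx_j,
   and dedicated W_{ki} with interfering W_{jk} at Rx_k.  (a, l, b, l') stands for
   "dedicated W_{al} with interfering W_{bl'} at Rx_a". *)
Definition exempted (i j k : user) (a l b l' : user) : Prop :=
  (a = j /\ l = k /\ b = i /\ l' = j) \/ (a = k /\ l = i /\ b = j /\ l' = k).

Definition separable_except (n : nat) (e p : user -> user -> nat) (i j k : user) : Prop :=
  [/\ forall (l b b' : user), b <> b' -> p b l <> p b' l %[mod n],
      forall (a l l' : user), l <> l' ->
                   e a l + p a l <> e a l' + p a l' %[mod n] &
      forall (a l b l' : user), b <> a -> ~ exempted i j k a l b l' ->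
                   e a l + p a l <> e a l' + p b l' %[mod n]].

(* Main.v *)
Require Import Defs.
From mathcomp Require Import all_boot.
From Stdlib Require Import Classical_Prop.

Fixpoint allS (P : nat -> bool) (s : seq nat) : bool :=
  match s with [::] => true | x :: s' => if P x then allS P s' else false end.
Fixpoint hasS (P : nat -> bool) (s : seq nat) : bool :=
  match s with [::] => false | x :: s' => if P x then true else hasS P s' end.
Definition mk3 (a b c : nat) : nat -> nat := fun m => if m == 0 then a else if m == 1 then b else c.
Definition arrR (h x y : nat -> nat) (r m : nat) : nat :=
  (h m + (if r == 0 then 0 else if r == 1 then x m else y m)) %% 5.
Definition okR (rd : nat) (h x y : nat -> nat) : bool :=
  allS (fun l => allS (fun r => allS (fun m => if (r == rd) && (m == l) then true else (arrR h x y r m != arrR h x y rd l)) (iota 0 3)) (iota 0 3)) (iota 0 3).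
Definition ex3 (P : (nat -> nat) -> bool) : bool :=
  hasS (fun a => hasS (fun b => hasS (fun c => P (mk3 a b c)) (iota 0 5)) (iota 0 5)) (iota 0 5).
Definition all3 (P : (nat -> nat) -> bool) : bool :=
  allS (fun a => allS (fun b => allS (fun c => P (mk3 a b c)) (iota 0 5)) (iota 0 5)) (iota 0 5).
Definition pre (x y : nat -> nat) : bool :=
  allS (fun l => if x l == 0 then false else if y l == 0 then false else x l != y l) (iota 0 3).
Definition bigcheck : bool :=
  all3 (fun x => all3 (fun y => if pre x y then (if ex3 (fun f => okR 0 f x y) then ~~ ex3 (fun g => okR 1 g x y) else true) else true)).
Lemma bigcheckT : bigcheck = true.
Proof. vm_compute. reflexivity. Qed.
From mathcomp Require Import zify.

Lemma allS_all P s : allS P s = all P s.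
Proof. by elim: s => //= z s ->; case: (P z). Qed.
Lemma hasS_has P s : hasS P s = has P s.
Proof. by elim: s => //= z s ->; case: (P z). Qed.

Lemma in_iota3 {z k} : z < k -> z \in iota 0 k.
Proof. by move=> h; rewrite mem_iota. Qed.

Lemma okR_spec1 {rd h x y l r m} : okR rd h x y -> l < 3 -> r < 3 -> m < 3 ->
  ~~ ((r == rd) && (m == l)) -> arrR h x y r m != arrR h x y rd l.
Proof.
rewrite /okR allS_all => /allP /(_ l) H hl hr hm hn.
move: (H (in_iota3 hl)); rewrite allS_all => /allP /(_ r (in_iota3 hr)).
rewrite allS_all => /allP /(_ m (in_iota3 hm)).
by rewrite (negbTE hn).
Qed.

Lemma okR_spec2 rd h x y : (forall l r m, l < 3 -> r < 3 -> m < 3 ->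
  ~~ ((r == rd) && (m == l)) -> arrR h x y r m != arrR h x y rd l) -> okR rd h x y.
Proof.
move=> H; rewrite /okR allS_all; apply/allP => l; rewrite mem_iota => /andP[_ hl].
rewrite allS_all; apply/allP => r; rewrite mem_iota => /andP[_ hr].
rewrite allS_all; apply/allP => m; rewrite mem_iota => /andP[_ hm].
case: ifP => hc //; apply: H => //; by rewrite hc.
Qed.

Lemma all3_inst {P} : all3 P -> forall {a b c}, a < 5 -> b < 5 -> c < 5 -> P (mk3 a b c).
Proof.
rewrite /all3 allS_all => /allP H a b c ha hb hc.
move: (H a (in_iota3 ha)); rewrite allS_all => /allP /(_ b (in_iota3 hb)).
by rewrite allS_all => /allP /(_ c (in_iota3 hc)).
Qed.

Lemma ex3_intro {P : (nat -> nat) -> bool} {a b c} : a < 5 -> b < 5 -> c < 5 -> P (mk3 a b c) -> ex3 P.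
Proof.
move=> ha hb hc hP; rewrite /ex3 hasS_has; apply/hasP; exists a; first exact: in_iota3.
rewrite hasS_has; apply/hasP; exists b; first exact: in_iota3.
rewrite hasS_has; apply/hasP; exists c; first exact: in_iota3.
done.
Qed.

Lemma okR_mk3 rd h x y : okR rd h x y =
  okR rd (mk3 (h 0) (h 1) (h 2)) (mk3 (x 0) (x 1) (x 2)) (mk3 (y 0) (y 1) (y 2)).
Proof. reflexivity. Qed.
Lemma pre_mk3 x y : pre x y = pre (mk3 (x 0) (x 1) (x 2)) (mk3 (y 0) (y 1) (y 2)).
Proof. reflexivity. Qed.

Lemma core f x y g : (forall m, m < 3 -> [/\ f m < 5, x m < 5, y m < 5 & g m < 5]) ->
  okR 0 f x y -> okR 1 g x y -> False.
Proof.
move=> Hb hA hB.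
have Ep : pre x y.
  rewrite /pre allS_all; apply/allP => l; rewrite mem_iota => /andP[_ hl].
  have h1 := okR_spec1 hA hl (isT : 1 < 3) hl isT.
  have h2 := okR_spec1 hA hl (isT : 2 < 3) hl isT.
  have h3 := okR_spec1 hB hl (isT : 2 < 3) hl isT.
  rewrite /arrR /= in h1 h2 h3.
  case: (x l =P 0) h1 => [->|_ _]; first by rewrite eqxx.
  case: (y l =P 0) h2 => [->|_ _]; first by rewrite eqxx.
  by apply/eqP => e; move: h3; rewrite e eqxx.
have [f0 x0 y0 g0] := Hb 0 isT.
have [f1 x1 y1 g1] := Hb 1 isT.
have [f2 x2 y2 g2] := Hb 2 isT.
have := all3_inst (all3_inst bigcheckT x0 x1 x2) y0 y1 y2.
rewrite -pre_mk3 Ep.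
have -> : ex3 (fun f => okR 0 f (mk3 (x 0) (x 1) (x 2)) (mk3 (y 0) (y 1) (y 2))).
  apply: (ex3_intro f0 f1 f2); by rewrite -okR_mk3.
have -> : ex3 (fun g => okR 1 g (mk3 (x 0) (x 1) (x 2)) (mk3 (y 0) (y 1) (y 2))).
  apply: (ex3_intro g0 g1 g2); by rewrite -okR_mk3.
done.
Qed.

Lemma dec_sep n e p a K w : decodes n e p a K w -> ~ K w ->
  forall w', w' <> w -> ~ K w' -> arr n e p a w' = arr n e p a w -> False.
Proof.
elim=> {w} [w Kw|w Hd IH] nK w' ne nK' heq; first by [].
exact: (IH w' ne heq nK' w (fun E => ne (esym E)) nK (esym heq)).
Qed.

Arguments dec_sep {n e p a K w}.
Lemma modlem E a b : a < 5 -> (E + b) %% 5 = ((E + a) %% 5 + (b + 5 - a) %% 5) %% 5.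
Proof.
move=> ha; rewrite modnDm.
have -> : E + a + (b + 5 - a) = (E + b) + 5 by lia.
by rewrite modnDr.
Qed.

Lemma other2 (c : user) : exists A B : user, [/\ A <> B, A <> c & B <> c].
Proof.
have [A hA] : exists A : user, nat_of_ord A = (c + 1) %% 3 by exists (inord ((c + 1) %% 3)); rewrite inordK // ltn_mod.
have [B hB] : exists B : user, nat_of_ord B = (c + 2) %% 3 by exists (inord ((c + 2) %% 3)); rewrite inordK // ltn_mod.
have hc := ltn_ord c.
exists A, B; split => /(congr1 val) /=; rewrite ?hA ?hB; lia.
Qed.

Lemma third {A B : user} : A <> B -> exists C : user, C <> A /\ C <> B.
Proof.
move=> hne; have hne' : nat_of_ord A <> nat_of_ord B by move=> E; apply: hne; apply: val_inj.
have ha := ltn_ord A; have hb := ltn_ord B.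
exists (inord (3 - A - B)); split => /(congr1 val) /=; rewrite inordK; lia.
Qed.

Definition um (m : nat) : user := inord m.

Lemma um_inj m l : m < 3 -> l < 3 -> um m = um l -> m = l.
Proof. by move=> hm hl /(congr1 val) /=; rewrite /um !inordK. Qed.

Arguments um_inj {m l}.
Definition role (A B C : user) (r : nat) : user := if r == 0 then A else if r == 1 then B else C.

Lemma role_inj A B C r r' : A <> B -> A <> C -> B <> C -> r < 3 -> r' < 3 ->
  role A B C r = role A B C r' -> r = r'.
Proof.
move=> hab hac hbc.
case: r => [|[|[|r]]] // _; case: r' => [|[|[|r']]] // _; rewrite /role /= => E //.
all: exfalso; first [by apply: hab; rewrite E | by apply: hac; rewrite E | by apply: hbc; rewrite E].
Qed.

Arguments role_inj {A B C r r'}.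
Lemma link E pa pb pc r : pa < 5 ->
  (E + (if r == 0 then pa else if r == 1 then pb else pc)) %% 5 =
  ((E + pa) %% 5 + (if r == 0 then 0 else if r == 1 then (pb + 5 - pa) %% 5 else (pc + 5 - pa) %% 5)) %% 5.
Proof.
move=> ha; case: ifP => _; first by rewrite addn0 modn_mod.
by case: ifP => _; apply: modlem.
Qed.

Lemma p_role (p : user -> user -> nat) A B C r (l : user) :
  p (role A B C r) l = if r == 0 then p A l else if r == 1 then p B l else p C l.
Proof. by rewrite /role; case: ifP => //; case: ifP. Qed.

Lemma good_rx (e p : user -> user -> nat) (K : msg -> Prop) A B C (Rx : user) :
  A <> B -> A <> C -> B <> C -> (forall w, ~ K w) -> (forall b l : user, p b l < 5) ->
  (forall l, decodes 5 e p Rx K (Rx, l)) ->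
  forall rd, rd < 3 -> Rx = role A B C rd ->
  okR rd (fun m => (e Rx (um m) + p A (um m)) %% 5)
         (fun m => (p B (um m) + 5 - p A (um m)) %% 5)
         (fun m => (p C (um m) + 5 - p A (um m)) %% 5).
Proof.
move=> hab hac hbc hK hp Hd rd hrd hRx.
apply: okR_spec2 => l r m hl hr hm hn.
have L : forall r m, arrR (fun m => (e Rx (um m) + p A (um m)) %% 5) (fun m => (p B (um m) + 5 - p A (um m)) %% 5) (fun m => (p C (um m) + 5 - p A (um m)) %% 5) r m = arr 5 e p Rx (role A B C r, um m).
  move=> r1 m1; rewrite /arrR /arr /= p_role (link (e Rx (um m1)) (p A (um m1)) (p B (um m1)) (p C (um m1)) r1 (hp _ _)) //.

rewrite !L.
apply/eqP => heq.
rewrite -hRx in heq. move: (dec_sep (Hd (um l)) (hK (Rx, um l)) (role A B C r, um m)) => H0. apply: H0 => //.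
- move=> [E1 E2]; rewrite hRx in E1.
  move: (role_inj hab hac hbc hr hrd E1) (um_inj hm hl E2) => e1 e2.
  by move: hn; rewrite e1 e2 !eqxx.
Qed.
Arguments good_rx {e p K A B C Rx}.

Lemma decodes_of {e p : user -> user -> nat} {i j k : user} {K : msg -> Prop} {a l : user} :
  separable_except 5 e p i j k ->
  (forall b l', (b, l') <> (a, l) -> exempted i j k a l b l' -> K (b, l')) ->
  decodes 5 e p a K (a, l).
Proof.
case=> S1 S2 S3 HK; apply: dec_alone => [[b l']] ne heq; apply: dec_known.
case: (classic (exempted i j k a l b l')) => hex; first exact: HK.
exfalso; rewrite /arr /= in heq.
case: (eqVneq b a) => hb.
- subst b; have hl : l <> l' by move=> E; apply: ne; rewrite E.
  exact: (S2 a l l' hl (esym heq)).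
- exact: (S3 a l b l' (elimN eqP hb) hex (esym heq)).
Qed.

Theorem lemma1 :
  (forall (e p : user -> user -> nat) (i j k : user),
      i <> j -> j <> k -> i <> k ->
      channel_conditions 5 e i j k ->
      (forall b l : user, p b l < 5) ->
      alignment 5 e p i j k ->
      separable_except 5 e p i j k ->
      let tr : seq transfer := [:: (i, j, (i, j)); (j, k, (j, k))] in
      [/\ valid_backhaul 5 e p tr, all_decoded 5 e p tr & theta_R tr = 2])
  /\
  (forall (e p : user -> user -> nat) (tr : seq transfer),
      (forall b l : user, p b l < 5) ->
      valid_backhaul 5 e p tr -> theta_R tr <= 1 -> ~ all_decoded 5 e p tr).
Proof.
split.
- move=> e p i j k hij hjk hik _ _ _ Hsep; cbv zeta; split.
  + move=> s t hs ht; case: s hs ht => [|[|s]] // _ /= <-.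
    * apply: decodes_of Hsep _ => b l' ne [[E _]|[E _]]; by [case: hij | case: hik].
    * apply: decodes_of Hsep _ => b l' ne [[_ [_ [-> ->]]]|[E _]]; last by case: hjk.
      by exists (i, j, (i, j)); split; rewrite ?inE ?eqxx.
  + move=> a l; apply: decodes_of Hsep _ => b l' ne [[-> [_ [-> ->]]]|[-> [_ [-> ->]]]].
    * by exists (i, j, (i, j)); split; rewrite ?inE ?eqxx.
    * by exists (j, k, (j, k)); split; rewrite ?inE ?eqxx ?orbT.
  + by [].
- move=> e p tr Hp Hval Hsz Hall.
  have [A [B [hAB [nA nB]]]] : exists A B : user, A <> B /\ (forall w, ~ received tr A w) /\ (forall w, ~ received tr B w).
    case: tr Hsz {Hval Hall} => [|t [|t' s]] // _.
    + exists (inord 0), (inord 1); split; first by move=> /(congr1 val) /=; rewrite !inordK.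
      by split => w [t0 []]; rewrite in_nil.
    + have [A [B [hAB hA hB]]] := other2 t.1.2.
      exists A, B; split => //; split => w [t0 [+ [hd _]]]; rewrite inE => /eqP ht.
      * by apply: hA; rewrite -hd ht.
      * by apply: hB; rewrite -hd ht.
  have [C [hCA hCB]] := third hAB.
  have hAC : A <> C by move=> E; apply: hCA; rewrite E.
  have hBC : B <> C by move=> E; apply: hCB; rewrite E.
  have okA := good_rx hAB hAC hBC nA Hp (fun l => Hall A l) 0 isT erefl.
  have okB := good_rx hAB hAC hBC nB Hp (fun l => Hall B l) 1 isT erefl.
  apply: (@core _ _ _ _ _ okA okB) => m _; split; exact: ltn_pmod.
Qed.
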